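(* Let $\mathcal{H}$ be a finite-dimensional complex Hilbert space, let $\ket{\psi_1},\ket{\psi_2}\in\mathcal{H}$ be pure states, let $\rho=\tfrac12(\ket{\psi_1}\!\bra{\psi_1}+\ket{\psi_2}\!\bra{\psi_2})$, and let $\alpha,\beta\in[0,1]$. Then for every ontological model (as defined in the context) for these preparations, $$\tfrac12\,\omega_\Lambda(\psi_1,\psi_2;\alpha,\beta)\le 2(1+\beta)-(1-\alpha)D_Q(\psi_1,\psi_2)-D_Q\big(\{\psi_1,\tfrac{1+\beta}{2}\},\{\rho,\alpha+\beta\}\big)-D_Q\big(\{\psi_2,\tfrac{1+\beta}{2}\},\{\rho,\alpha+\beta\}\big).$$
   Context: For a state $\sigma$ and POVM $\mathcal{M}=\{M_k\}$, $p(k|\sigma,\mathcal{M})=\mathrm{Tr}(\sigma M_k)$. Weighted distinguishability: for states $\phi_1,\phi_2$ and weights $w_1,w_2\ge0$, $D_Q(\{\phi_1,w_1\},\{\phi_2,w_2\})=\max_{\mathcal{M}}\big(w_1p(1|\phi_1,\mathcal{M})+w_2p(2|\phi_2,\mathcal{M})\big)$ over all two-outcome POVMs $\mathcal{M}=\{M_1,M_2\}$; $D_Q(\psi_1,\psi_2)=D_Q(\{\psi_1,\tfrac12\},\{\psi_2,\tfrac12\})$. Ontological model: a measure space $(\Lambda,d\lambda)$; for each preparation $\sigma\in\{\psi_1,\psi_2,\rho\}$ a probability density $\mu(\lambda|\sigma)\ge0$ with $\int_\Lambda\mu(\lambda|\sigma)d\lambda=1$; for each $n$-outcome POVM $\mathcal{M}=\{M_k\}$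 response functions $\xi(k|\lambda,\mathcal{M})\ge0$ with $\sum_k\xi(k|\lambda,\mathcal{M})=1$ for all $\lambda$; such that $\mathrm{Tr}(\sigma M_k)=\int_\Lambda\mu(\lambda|\sigma)\xi(k|\lambda,\mathcal{M})d\lambda$ for all such $\sigma,\mathcal{M},k$. Moreover $\mu(\lambda|\rho)=\tfrac12(\mu(\lambda|\psi_1)+\mu(\lambda|\psi_2))$ for all $\lambda$. Generalized epistemic overlap: with $\tilde\mu_1=(1+\beta)\mu(\cdot|\psi_1)$, $\tilde\mu_2=(1+\beta)\mu(\cdot|\psi_2)$, $\tilde\mu_3=(\alpha+\beta)(\mu(\cdot|\psi_1)+\mu(\cdot|\psi_2))$, $\omega_\Lambda(\psi_1,\psi_2;\alpha,\beta)=\int_\Lambda\min(\tilde\mu_1,\tilde\mu_2)d\lambda+\int_\Lambda\min(\tilde\mu_1,\tilde\mu_3)d\lambda+\int_\Lambda\min(\tilde\mu_2,\tilde\mu_3)d\lambda-2(\alpha+\beta)-\int_\Lambda\min(\tilde\mu_1,\tilde\mu_2,\tilde\mu_3)d\lambda$. *)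

(* Defs.v *)
From HB Require Import structures.
From mathcomp Require Import all_boot all_order all_algebra.
From mathcomp Require Import complex.
From mathcomp Require Import all_classical all_reals all_analysis.

Set Implicit Arguments.
Unset Strict Implicit.
Unset Printing Implicit Defensive.

Import Order.TTheory GRing.Theory Num.Theory.
Local Open Scope classical_set_scope.
Local Open Scope ring_scope.

(* The Hilbert space is C^n, C = R[i] for R : realType; vectors are columns. *)

Definition dagger (R : realType) (p q : nat) (A : 'M[R[i]]_(p, q)) : 'M[R[i]]_(q, p) :=
  (map_mx Num.conj A)^T.

(* positive semidefinite (over C): <v, A v> is real and >= 0 for all v
   (in the partial order of the numClosedFieldType R[i], 0 <= z means z is a
   nonnegative real) *)
Definition psdmx (R : realType) (n : nat) (A : 'M[R[i]]_n) : Prop :=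
  forall v : 'cV[R[i]]_n, 0 <= (dagger v *m A *m v) ord0 ord0.

Definition is_povm (R : realType) (n k : nat) (M : 'I_k -> 'M[R[i]]_n) : Prop :=
  (forall j, psdmx (M j)) /\ \sum_(j < k) M j = 1%:M.

Definition pure_state (R : realType) (n : nat) (psi : 'cV[R[i]]_n) : Prop :=
  (dagger psi *m psi) ord0 ord0 = 1.

Definition ketbra (R : realType) (n : nat) (psi : 'cV[R[i]]_n) : 'M[R[i]]_n :=
  psi *m dagger psi.

Definition rho_mix (R : realType) (n : nat) (psi1 psi2 : 'cV[R[i]]_n) : 'M[R[i]]_n :=
  2^-1 *: (ketbra psi1 + ketbra psi2).

(* p(k | sigma, M) = Tr(sigma M_k)  (real for sigma, M_k psd; we take the real part) *)
Definition prob (R : realType) (n : nat) (sigma Mk : 'M[R[i]]_n) : R :=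
  complex.Re (\tr (sigma *m Mk)).

(* weighted distinguishability: max (= sup) over two-outcome POVMs {M_1, M_2};
   outcome 1 is ord0 and outcome 2 is ord_max of 'I_2 *)
Definition DQw (R : realType) (n : nat) (phi1 : 'M[R[i]]_n) (w1 : R)
    (phi2 : 'M[R[i]]_n) (w2 : R) : R :=
  sup [set x : R | exists M : 'I_2 -> 'M[R[i]]_n,
         is_povm M /\ x = w1 * prob phi1 (M ord0) + w2 * prob phi2 (M ord_max)].

Definition DQ (R : realType) (n : nat) (phi1 phi2 : 'M[R[i]]_n) : R :=
  DQw phi1 2^-1 phi2 2^-1.

Definition prob_density (R : realType) (d : measure_display) (L : measurableType d)
    (m : {measure set L -> \bar R}) (f : L -> R) : Prop :=
  measurable_fun setT f /\ (forall x, 0 <= f x) /\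
  (\int[m]_x (f x)%:E = 1)%E.

Definition response_functions (R : realType) (n : nat) (d : measure_display)
    (L : measurableType d) (k : nat) (xiM : 'I_k -> L -> R) : Prop :=
  (forall j, measurable_fun setT (xiM j)) /\
  (forall j x, 0 <= xiM j x) /\
  (forall x, \sum_(j < k) xiM j x = 1).

Definition reproduces (R : realType) (n : nat) (d : measure_display)
    (L : measurableType d) (m : {measure set L -> \bar R})
    (xi : forall k : nat, ('I_k -> 'M[R[i]]_n) -> 'I_k -> L -> R)
    (sigma : 'M[R[i]]_n) (f : L -> R) : Prop :=
  forall (k : nat) (M : 'I_k -> 'M[R[i]]_n), is_povm M ->
    forall j : 'I_k, (prob sigma (M j))%:E = (\int[m]_x (f x * xi k M j x)%:E)%E.

Definition ontological_model (R : realType) (n : nat) (d : measure_display)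
    (L : measurableType d) (m : {measure set L -> \bar R})
    (sigma1 sigma2 sigmar : 'M[R[i]]_n) (mu1 mu2 mur : L -> R)
    (xi : forall k : nat, ('I_k -> 'M[R[i]]_n) -> 'I_k -> L -> R) : Prop :=
  [/\ prob_density m mu1, prob_density m mu2 & prob_density m mur] /\
  (forall (k : nat) (M : 'I_k -> 'M[R[i]]_n), is_povm M ->
     response_functions n (xi k M)) /\
  [/\ reproduces m xi sigma1 mu1, reproduces m xi sigma2 mu2
     & reproduces m xi sigmar mur] /\
  (forall x, mur x = 2^-1 * (mu1 x + mu2 x)).

Definition omega_overlap (R : realType) (d : measure_display) (L : measurableType d)
    (m : {measure set L -> \bar R}) (mu1 mu2 : L -> R) (alpha beta : R) : \bar R :=
  let t1 := fun x => (1 + beta) * mu1 x in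
  let t2 := fun x => (1 + beta) * mu2 x in
  let t3 := fun x => (alpha + beta) * (mu1 x + mu2 x) in
  (\int[m]_x (Num.min (t1 x) (t2 x))%:E
   + \int[m]_x (Num.min (t1 x) (t3 x))%:E
   + \int[m]_x (Num.min (t2 x) (t3 x))%:E
   - (2 * (alpha + beta))%:E
   - \int[m]_x (Num.min (Num.min (t1 x) (t2 x)) (t3 x))%:E)%E.

(* Main.v *)
Require Import Defs.
From HB Require Import structures.
From mathcomp Require Import all_boot all_order all_algebra.
From mathcomp Require Import complex.
From mathcomp Require Import all_classical all_reals all_analysis.
From mathcomp Require Import ring lra measurable_realfun.
Import Order.TTheory GRing.Theory Num.Theory.
Local Open Scope classical_set_scope.
Local Open Scope ring_scope.

Module Aux.
Set Implicit Arguments.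
Unset Strict Implicit.
Lemma pw (R : realFieldType) (alpha beta A B : R) : 0 <= alpha <= 1 -> 0 <= beta ->
  0 <= A -> 0 <= B ->
  Num.min ((1 + beta) * A) ((1 + beta) * B) <=
  Num.min (Num.min ((1 + beta) * A) ((1 + beta) * B)) ((alpha + beta) * (A + B))
  + (1 - alpha) * Num.min A B.
Proof.
move=> /andP[a0 a1] b0 A0 B0.
have c0 : 0 <= 1 + beta by lra.
have a10 : 0 <= 1 - alpha by lra.
have ab0 : 0 <= alpha + beta by lra.
have h1 := mulr_ge0 a10 A0; have h2 := mulr_ge0 a10 B0.
have h3 := mulr_ge0 ab0 A0; have h4 := mulr_ge0 ab0 B0.
have e1 : (alpha + beta) * (A + B) + (1 - alpha) * A - (1 + beta) * A = (alpha + beta) * B by ring.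
have e2 : (alpha + beta) * (A + B) + (1 - alpha) * B - (1 + beta) * B = (alpha + beta) * A by ring.
have [AB|BA] := leP A B.
- rewrite (min_l (ler_wpM2l c0 AB)).
  by rewrite -lerBlDr le_min; apply/andP; split; lra.
- have BA' := ltW BA.
  rewrite (min_r (ler_wpM2l c0 BA')).
  by rewrite -lerBlDr le_min; apply/andP; split; lra.
Qed.

Lemma fin_ineq (R : realFieldType) (alpha beta Dq D1 D2 r12 r13 r23 r123 rm : R) :
  D1 <= (1 + beta) / 2 + (alpha + beta) - 2^-1 * r13 ->
  D2 <= (1 + beta) / 2 + (alpha + beta) - 2^-1 * r23 ->
  r12 <= r123 + (1 - alpha) * rm ->
  (1 - alpha) * Dq <= (1 - alpha) * (2^-1 + 2^-1 - 2^-1 * rm) ->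
  2^-1 * (r12 + r13 + r23 - 2 * (alpha + beta) - r123) <=
  2 * (1 + beta) - (1 - alpha) * Dq - D1 - D2.
Proof. move=> h1 h2 h3 h4. lra. Qed.

Section H.
Context (R : realType) (d : measure_display) (L : measurableType d)
  (m : {measure set L -> \bar R}).

Lemma mE (f : L -> R) : measurable_fun setT f ->
  measurable_fun setT (fun x => (f x)%:E).
Proof. by move=> mf; apply/measurable_EFinP. Qed.

Lemma intD (f g : L -> R) : measurable_fun setT f -> measurable_fun setT g ->
  (forall x, 0 <= f x) -> (forall x, 0 <= g x) ->
  (\int[m]_x ((f x + g x)%:E) = \int[m]_x (f x)%:E + \int[m]_x (g x)%:E)%E.
Proof.
move=> mf mg f0 g0.
under eq_integral do rewrite EFinD.
apply: ge0_integralD => //; try (by move=> x _; rewrite lee_fin); exact: mE.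
Qed.

Lemma intZ (c : R) (f : L -> R) : 0 <= c -> measurable_fun setT f ->
  (forall x, 0 <= f x) ->
  (\int[m]_x ((c * f x)%:E) = c%:E * \int[m]_x (f x)%:E)%E.
Proof.
move=> c0 mf f0.
under eq_integral do rewrite EFinM.
apply: ge0_integralZl_EFin => //; try (by move=> x _; rewrite lee_fin); exact: mE.
Qed.

Lemma intle (f g : L -> R) : measurable_fun setT f -> measurable_fun setT g ->
  (forall x, 0 <= f x) -> (forall x, f x <= g x) ->
  (\int[m]_x (f x)%:E <= \int[m]_x (g x)%:E)%E.
Proof.
move=> mf mg f0 fg.
apply: ge0_le_integral => //; try (by move=> x _; rewrite lee_fin); exact: mE.
Qed.

Lemma intfin (h f : L -> R) (c : R) : measurable_fun setT h ->
  (forall x, 0 <= h x) -> measurable_fun setT f -> (forall x, 0 <= f x) ->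
  0 <= c -> (forall x, h x <= c * f x) -> (\int[m]_x (f x)%:E = 1)%E ->
  (\int[m]_x (h x)%:E = (fine (\int[m]_x (h x)%:E))%:E)%E /\
  0 <= fine (\int[m]_x (h x)%:E) <= c.
Proof.
move=> mh h0 mf f0 c0 hf f1.
have H1 : (0 <= \int[m]_x (h x)%:E)%E.
  by apply: integral_ge0 => x _; rewrite lee_fin.
have H2 : (\int[m]_x (h x)%:E <= c%:E)%E.
  apply: (le_trans (intle mh _ h0 hf)) => //.
    exact: measurable_funM.
  by rewrite intZ // f1 mule1.
have hfin : (\int[m]_x (h x)%:E)%E \is a fin_num.
  by rewrite ge0_fin_numE // (le_lt_trans H2) // ltry.
split; first by rewrite fineK.
by apply/andP; split; rewrite -lee_fin fineK.
Qed.

Lemma DQw_bound (n : nat) (phi1 phi2 : 'M[R[i]]_n) (w1 w2 : R) (f1 f2 h : L -> R)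
  (xi : forall k : nat, ('I_k -> 'M[R[i]]_n) -> 'I_k -> L -> R) :
  0 <= w1 -> 0 <= w2 -> prob_density m f1 -> prob_density m f2 ->
  (forall (k : nat) (M : 'I_k -> 'M[R[i]]_n), is_povm M ->
     response_functions n (xi k M)) ->
  reproduces m xi phi1 f1 -> reproduces m xi phi2 f2 ->
  measurable_fun setT h -> (forall x, 0 <= h x) ->
  (forall x, h x <= w1 * f1 x) -> (forall x, h x <= w2 * f2 x) ->
  DQw phi1 w1 phi2 w2 <= w1 + w2 - fine (\int[m]_x (h x)%:E).
Proof.
move=> w10 w20 [mf1 [f10 I1]] [mf2 [f20 I2]] resp rep1 rep2 mh h0 hf1 hf2.
have [hE /andP[hge0 hle]] := intfin mh h0 mf1 f10 w10 hf1 I1.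
rewrite /DQw.
set S := [set x : R | _].
have [S0|Sne] := pselect (S !=set0); last first.
  have -> : S = set0.
    by apply/seteqP; split => // x Sx; apply: Sne; exists x.
  rewrite sup0; lra.
apply: ge_sup => // _ [M [HM ->]].
have [mxi [xi0 xi1]] := resp 2 M HM.
set a := prob phi1 (M ord0).
set b := prob phi2 (M ord_max).
set r := fine _.
suff : ((w1 * a + w2 * b + r)%:E <= (w1 + w2)%:E)%E.
  by rewrite lee_fin => ?; lra.
have Ea := rep1 2 M HM ord0.
have Eb := rep2 2 M HM ord_max.
have mg1 : measurable_fun setT (fun x => f1 x * xi 2 M ord0 x).
  exact: measurable_funM.
have mg2 : measurable_fun setT (fun x => f2 x * xi 2 M ord_max x).
  exact: measurable_funM.
have g10 : forall x, 0 <= f1 x * xi 2 M ord0 x by move=> x; apply: mulr_ge0.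
have g20 : forall x, 0 <= f2 x * xi 2 M ord_max x by move=> x; apply: mulr_ge0.
rewrite !EFinD !EFinM -/a -/b Ea Eb /r -hE -!intZ //.
rewrite -!intD //; first last.
- by move=> x; apply: mulr_ge0.
- by move=> x; apply: mulr_ge0.
- exact: measurable_funM.
- exact: measurable_funM.
- by move=> x; apply: addr_ge0; apply: mulr_ge0.
- by apply: measurable_funD; exact: measurable_funM.
have -> : (w1%:E + w2%:E)%E = (\int[m]_x ((w1 * f1 x + w2 * f2 x)%:E))%E.
  rewrite intD; last 4 first.
  - exact: measurable_funM.
  - exact: measurable_funM.
  - by move=> x; apply: mulr_ge0.
  - by move=> x; apply: mulr_ge0.
  by rewrite !intZ // I1 I2 !mule1.
apply: intle.
- apply: measurable_funD => //; apply: measurable_funD; exact: measurable_funM.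
- apply: measurable_funD; exact: measurable_funM.
- move=> x; apply: addr_ge0 => //; apply: addr_ge0; apply: mulr_ge0 => //; exact: mulr_ge0.
move=> x.
have s1 := xi1 x; rewrite !big_ord_recl big_ord0 addr0 in s1.
move: s1; have -> : lift ord0 ord0 = ord_max :> 'I_2 by apply: val_inj.
move=> s1.
have e0 := xi0 ord0 x; have e1 := xi0 ord_max x.
have p1 : 0 <= xi 2 M ord_max x * (w1 * f1 x - h x).
  by apply: mulr_ge0 => //; rewrite subr_ge0.
have p2 : 0 <= xi 2 M ord0 x * (w2 * f2 x - h x).
  by apply: mulr_ge0 => //; rewrite subr_ge0.
have E0 : xi 2 M ord0 x = 1 - xi 2 M ord_max x by lra.
rewrite E0 in p2 *.
lra.
Qed.

End H.

End Aux.
Import Aux.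

Lemma mmin (R : realType) (d : measure_display) (L : measurableType d) (F G : L -> R) :
  measurable_fun setT F -> measurable_fun setT G ->
  measurable_fun setT (fun x => Num.min (F x) (G x)).
Proof. by move=> mF mG; apply: measurable_minr. Qed.
Arguments mmin {R d L F G}.

Theorem lemma1 (R : realType) (n : nat) (psi1 psi2 : 'cV[R[i]]_n) (alpha beta : R)
    (d : measure_display) (L : measurableType d) (m : {measure set L -> \bar R})
    (mu1 mu2 murho : L -> R)
    (xi : forall k : nat, ('I_k -> 'M[R[i]]_n) -> 'I_k -> L -> R) :
  pure_state psi1 -> pure_state psi2 ->
  0 <= alpha <= 1 -> 0 <= beta <= 1 ->
  ontological_model m (ketbra psi1) (ketbra psi2) (rho_mix psi1 psi2) mu1 mu2 murho xi ->
  ((2^-1)%:E * omega_overlap m mu1 mu2 alpha beta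
   <= (2 * (1 + beta) - (1 - alpha) * DQ (ketbra psi1) (ketbra psi2)
       - DQw (ketbra psi1) ((1 + beta) / 2) (rho_mix psi1 psi2) (alpha + beta)
       - DQw (ketbra psi2) ((1 + beta) / 2) (rho_mix psi1 psi2) (alpha + beta))%:E)%E.
Proof.
move=> _ _ /andP[a0 a1] /andP[b0 b1]
  [[pd1 pd2 pdr] [resp [[rep1 rep2 repr] hr]]].
have [mf1 [f10 I1]] := pd1.
have [mf2 [f20 I2]] := pd2.
have c0 : 0 <= 1 + beta by lra.
have ab0 : 0 <= alpha + beta by lra.
have mt1 : measurable_fun setT (fun x => (1 + beta) * mu1 x).
  exact: measurable_funM.
have mt2 : measurable_fun setT (fun x => (1 + beta) * mu2 x).
  exact: measurable_funM.
have mt3 : measurable_fun setT (fun x => (alpha + beta) * (mu1 x + mu2 x)).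
  by apply: measurable_funM => //; exact: measurable_funD.
have t10 : forall x, 0 <= (1 + beta) * mu1 x by move=> x; exact: mulr_ge0.
have t20 : forall x, 0 <= (1 + beta) * mu2 x by move=> x; exact: mulr_ge0.
have t30 : forall x, 0 <= (alpha + beta) * (mu1 x + mu2 x).
  by move=> x; apply: mulr_ge0 => //; exact: addr_ge0.
have g12_0 : forall x, 0 <= Num.min ((1 + beta) * mu1 x) ((1 + beta) * mu2 x).
  by move=> x; rewrite le_min t10 t20.
have g13_0 : forall x, 0 <= Num.min ((1 + beta) * mu1 x) ((alpha + beta) * (mu1 x + mu2 x)).
  by move=> x; rewrite le_min t10 t30.
have g23_0 : forall x, 0 <= Num.min ((1 + beta) * mu2 x) ((alpha + beta) * (mu1 x + mu2 x)).
  by move=> x; rewrite le_min t20 t30.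
have g123_0 : forall x, 0 <= Num.min (Num.min ((1 + beta) * mu1 x) ((1 + beta) * mu2 x))
    ((alpha + beta) * (mu1 x + mu2 x)).
  by move=> x; rewrite !le_min t10 t20 t30.
have hm0 : forall x, 0 <= Num.min (mu1 x) (mu2 x).
  by move=> x; rewrite le_min f10 f20.
have [E12 _] := intfin (m := m) (mmin mt1 mt2) g12_0 mf1 f10 c0
  (fun x => ltac:(by rewrite ge_min lexx)) I1.
have [E13 _] := intfin (m := m) (mmin mt1 mt3) g13_0 mf1 f10 c0
  (fun x => ltac:(by rewrite ge_min lexx)) I1.
have [E23 _] := intfin (m := m) (mmin mt2 mt3) g23_0 mf2 f20 c0
  (fun x => ltac:(by rewrite ge_min lexx)) I2.
have [E123 _] := intfin (m := m) (mmin (mmin mt1 mt2) mt3) g123_0 mf1 f10 c0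
  (fun x => ltac:(by rewrite !ge_min lexx)) I1.
have [Em _] := intfin (m := m) (mmin mf1 mf2) hm0 mf1 f10 ler01
  (fun x => ltac:(by rewrite mul1r ge_min lexx)) I1.
cbv beta in E12, E13, E23, E123, Em.
rewrite /omega_overlap /= E12 E13 E23 E123.
have mhm := mmin mf1 mf2.
have D0 : DQ (ketbra psi1) (ketbra psi2) <= 2^-1 + 2^-1
    - fine (\int[m]_x ((2^-1 * Num.min (mu1 x) (mu2 x))%:E))%E.
  rewrite /DQ; apply: (DQw_bound _ _ pd1 pd2 resp rep1 rep2).
  - by rewrite invr_ge0.
  - by rewrite invr_ge0.
  - exact: measurable_funM.
  - by move=> x; apply: mulr_ge0 => //; rewrite invr_ge0.
  - by move=> x; rewrite ler_pM2l ?invr_gt0 // ge_min lexx.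
  - by move=> x; rewrite ler_pM2l ?invr_gt0 // ge_min lexx orbT.
rewrite intZ ?invr_ge0 // Em -EFinM /= in D0.
have D1 : DQw (ketbra psi1) ((1 + beta) / 2) (rho_mix psi1 psi2) (alpha + beta)
    <= (1 + beta) / 2 + (alpha + beta)
    - fine (\int[m]_x ((2^-1 * Num.min ((1 + beta) * mu1 x) ((alpha + beta) * (mu1 x + mu2 x)))%:E))%E.
  apply: (DQw_bound _ _ pd1 pdr resp rep1 repr).
  - by apply: divr_ge0.
  - done.
  - by apply: measurable_funM => //; exact: mmin mt1 mt3.
  - by move=> x; apply: mulr_ge0 => //; rewrite invr_ge0.
  - move=> x; have := g13_0 x.
    have : Num.min ((1 + beta) * mu1 x) ((alpha + beta) * (mu1 x + mu2 x)) <= (1 + beta) * mu1 x.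
      by rewrite ge_min lexx.
    lra.
  - move=> x; rewrite hr; have := g13_0 x.
    have : Num.min ((1 + beta) * mu1 x) ((alpha + beta) * (mu1 x + mu2 x)) <= (alpha + beta) * (mu1 x + mu2 x).
      by rewrite ge_min lexx orbT.
    lra.
rewrite (@intZ _ _ _ m (2^-1) _ _ (mmin mt1 mt3) g13_0) ?invr_ge0 // in D1; cbv beta in D1; rewrite E13 -EFinM /= in D1.
have D2 : DQw (ketbra psi2) ((1 + beta) / 2) (rho_mix psi1 psi2) (alpha + beta)
    <= (1 + beta) / 2 + (alpha + beta)
    - fine (\int[m]_x ((2^-1 * Num.min ((1 + beta) * mu2 x) ((alpha + beta) * (mu1 x + mu2 x)))%:E))%E.
  apply: (DQw_bound _ _ pd2 pdr resp rep2 repr).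
  - by apply: divr_ge0.
  - done.
  - by apply: measurable_funM => //; exact: mmin mt2 mt3.
  - by move=> x; apply: mulr_ge0 => //; rewrite invr_ge0.
  - move=> x; have := g23_0 x.
    have : Num.min ((1 + beta) * mu2 x) ((alpha + beta) * (mu1 x + mu2 x)) <= (1 + beta) * mu2 x.
      by rewrite ge_min lexx.
    lra.
  - move=> x; rewrite hr; have := g23_0 x.
    have : Num.min ((1 + beta) * mu2 x) ((alpha + beta) * (mu1 x + mu2 x)) <= (alpha + beta) * (mu1 x + mu2 x).
      by rewrite ge_min lexx orbT.
    lra.
rewrite (@intZ _ _ _ m (2^-1) _ _ (mmin mt2 mt3) g23_0) ?invr_ge0 // in D2; cbv beta in D2; rewrite E23 -EFinM /= in D2.
have a10 : 0 <= 1 - alpha by lra.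
have K : (\int[m]_x (Num.min ((1 + beta) * mu1 x) ((1 + beta) * mu2 x))%:E
   <= \int[m]_x ((Num.min (Num.min ((1 + beta) * mu1 x) ((1 + beta) * mu2 x))
    ((alpha + beta) * (mu1 x + mu2 x)) + (1 - alpha) * Num.min (mu1 x) (mu2 x))%:E))%E.
  apply: (intle m (mmin mt1 mt2) _ g12_0).
  - by apply: measurable_funD; [exact: (mmin (mmin mt1 mt2) mt3)|exact: measurable_funM].
  - by move=> x /=; apply: pw => //; rewrite a0 a1.
have mhm' : measurable_fun setT (fun x => (1 - alpha) * Num.min (mu1 x) (mu2 x)).
  exact: measurable_funM.
rewrite (intD m (mmin (mmin mt1 mt2) mt3) mhm' g123_0) in K; last first.
  by move=> x; apply: mulr_ge0.
rewrite (@intZ _ _ _ m (1 - alpha) _ a10 mhm hm0) in K.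
cbv beta in K.
rewrite E12 E123 Em -EFinM -EFinD lee_fin in K.
have M0 : (1 - alpha) * DQ (ketbra psi1) (ketbra psi2) <=
   (1 - alpha) * (2^-1 + 2^-1 - 2^-1 * fine (\int[m]_x (Num.min (mu1 x) (mu2 x))%:E)%E).
  by apply: ler_wpM2l.
rewrite -!EFinD -?EFinB -EFinM lee_fin.
exact: fin_ineq D1 D2 K M0.
Qed.
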